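(* Let $A$ be the random matrix defined in the context. There is an absolute constant $c$ such that, with probability $1-o(1)$ as $k\to\infty$ (with $D\ge c\log k$), for every $\delta\ge c\sqrt{(\log k)/D}$ we have $1-\delta\le\lambda_\delta(A)\le1$.
   Context: Random instance: let $S_1,\dots,S_k\subseteq[D]$ be independent uniformly random subsets of $[D]$ (each element included independently with probability $1/2$), and let $A\in\mathbb{R}^{D\times k}$ have $A_{ij}=1/|S_j|$ if $i\in S_j$ and $A_{ij}=0$ otherwise. For a matrix $M$, $\|M\|_{\max}=\max_{i,j}|M_{ij}|$. For $\delta\ge 0$, $\lambda_\delta(A)$ is the optimal value of: minimize $\|B\|_{\max}$ over $B\in\mathbb{R}^{k\times D}$ subject to $\|BA-I_k\|_{\max}\le\delta$. *)

(* Defs.v *)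
From mathcomp Require Import all_boot.
From Stdlib Require Export Reals.
Open Scope R_scope.

(* Sample space: k independent uniformly random subsets S_1..S_k of [D];
   uniform over all (2^D)^k outcomes. *)
Definition Omega (D k : nat) := {ffun 'I_k -> {set 'I_D}}.

Definition Amat {D k : nat} (S : Omega D k) (i : 'I_D) (j : 'I_k) : R :=
  if i \in S j then / INR #|S j| else 0.

Definition maxnorm {m n : nat} (M : 'I_m -> 'I_n -> R) : R :=
  \big[Rmax/0]_(i < m) \big[Rmax/0]_(j < n) Rabs (M i j).

Definition mulBA {k D : nat} (B : 'I_k -> 'I_D -> R) (A : 'I_D -> 'I_k -> R)
  : 'I_k -> 'I_k -> R :=
  fun j j' => \big[Rplus/0]_(i < D) (B j i * A i j').

Definition idm {k : nat} : 'I_k -> 'I_k -> R :=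
  fun j j' => if j == j' then 1 else 0.

Definition feasible_values {k D : nat} (delta : R) (A : 'I_D -> 'I_k -> R)
  : R -> Prop :=
  fun v => exists B : 'I_k -> 'I_D -> R,
    maxnorm (fun j j' => mulBA B A j j' - idm j j') <= delta /\ v = maxnorm B.

Definition is_lambda {k D : nat} (delta : R) (A : 'I_D -> 'I_k -> R) (l : R)
  : Prop :=
  (forall v, feasible_values delta A v -> l <= v) /\
  (forall m, (forall v, feasible_values delta A v -> m <= v) -> m <= l).

(* Main.v *)
From HB Require Import structures.
Require Import Defs.
From mathcomp Require Import all_boot.
From Stdlib Require Import Reals Lra.
From Stdlib Require ZArith.
Open Scope R_scope.

Lemma RplusA' : associative Rplus. Proof. move=> x y z; lra. Qed.
Lemma RplusC' : commutative Rplus. Proof. move=> x y; lra. Qed.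
Lemma Rplus0' : left_id 0 Rplus. Proof. move=> x; lra. Qed.
Lemma RmultA' : associative Rmult. Proof. move=> x y z; ring. Qed.
Lemma RmultC' : commutative Rmult. Proof. move=> x y; ring. Qed.
Lemma Rmult1' : left_id 1 Rmult. Proof. move=> x; ring. Qed.
Lemma Rmult0l' : left_zero 0 Rmult. Proof. move=> x; ring. Qed.
Lemma Rmult0r' : right_zero 0 Rmult. Proof. move=> x; ring. Qed.
Lemma RmultDl' : left_distributive Rmult Rplus. Proof. move=> x y z; ring. Qed.
Lemma RmultDr' : right_distributive Rmult Rplus. Proof. move=> x y z; ring. Qed.
HB.instance Definition _ := Monoid.isComLaw.Build R 0 Rplus RplusA' RplusC' Rplus0'.
HB.instance Definition _ := Monoid.isComLaw.Build R 1 Rmult RmultA' RmultC' Rmult1'.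
HB.instance Definition _ := Monoid.isMulLaw.Build R 0 Rmult Rmult0l' Rmult0r'.
HB.instance Definition _ := Monoid.isAddLaw.Build R Rmult Rplus RmultDl' RmultDr'.



Lemma sum_set_prod (T : finType) (F : T -> bool -> R) :
  \big[Rplus/0]_(X : {set T}) \big[Rmult/1]_(i : T) F i (i \in X)
  = \big[Rmult/1]_(i : T) (F i true + F i false).
Proof.
have -> : \big[Rmult/1]_(i : T) (F i true + F i false)
   = \big[Rmult/1]_(i : T) \big[Rplus/0]_(b : bool) F i b.
  by apply: eq_bigr => i _; rewrite big_bool.
rewrite bigA_distr_bigA.
rewrite (reindex (fun f : {ffun T -> bool} => [set i | f i])) /=.
  by apply: eq_bigr => f _; apply: eq_bigr => i _; rewrite inE.
exists (fun X : {set T} => [ffun i => i \in X]) => x _.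
  by apply/ffunP => i; rewrite ffunE inE.
by apply/setP => i; rewrite inE ffunE.
Qed.

Lemma exp_sum (I : Type) (r : seq I) (P : pred I) (F : I -> R) :
  exp (\big[Rplus/0]_(i <- r | P i) F i) = \big[Rmult/1]_(i <- r | P i) exp (F i).
Proof. apply: (big_morph exp exp_plus exp_0). Qed.

Lemma INR_card (T : finType) (A : {set T}) :
  INR #|A| = \big[Rplus/0]_(i : T) (if i \in A then 1 else 0).
Proof.
rewrite -sum1_card (big_morph INR plus_INR (erefl (INR 0))) big_mkcond /=.
by apply: eq_bigr => i _; case: (i \in A).
Qed.

Lemma iter_mult n (x : R) : iter n (Rmult x) 1 = x ^ n.
Proof. by elim: n => //= n ->. Qed.

Lemma sum_const_ord n (x : R) : \big[Rplus/0]_(i < n) x = INR n * x.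
Proof.
rewrite big_const_ord; elim: n => [|n IH]; first by rewrite /=; lra.
rewrite S_INR -/(iter n (Rplus x) 0) /= IH; lra.
Qed.

Lemma prod_const_ord n (x : R) : \big[Rmult/1]_(i < n) x = x ^ n.
Proof. by rewrite big_const_ord iter_mult. Qed.

Lemma sum_le (I : Type) (r : seq I) (P : pred I) (F G : I -> R) :
  (forall i, P i -> F i <= G i) ->
  \big[Rplus/0]_(i <- r | P i) F i <= \big[Rplus/0]_(i <- r | P i) G i.
Proof.
move=> H; apply: (big_ind2 (fun x y => x <= y)) => //; first lra.
by move=> *; lra.
Qed.

Lemma sum_ge0 (I : Type) (r : seq I) (P : pred I) (F : I -> R) :
  (forall i, P i -> 0 <= F i) -> 0 <= \big[Rplus/0]_(i <- r | P i) F i.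
Proof.
move=> H; apply: (big_ind (fun x => 0 <= x)) => //; first lra.
by move=> *; lra.
Qed.

Lemma term_le_sum (I : finType) (F : I -> R) (j : I) :
  (forall i, 0 <= F i) -> F j <= \big[Rplus/0]_(i : I) F i.
Proof.
move=> H; rewrite (bigD1 j) //=.
match goal with |- context [Rplus (F j) ?s] => have : 0 <= s by apply: sum_ge0 => i _; apply: H end.
lra.
Qed.

Lemma exp_mul_pow (a : R) n : exp a ^ n = exp (INR n * a).
Proof.
elim: n => [|n IH]; first by rewrite /= Rmult_0_l exp_0.
rewrite S_INR /pow -/(pow (exp a) n) IH -exp_plus; f_equal; lra.
Qed.

Lemma card_sets_R D : INR #|{set 'I_D}| = 2 ^ D.
Proof.
have := @INR_card _ [set: {set 'I_D}].
rewrite cardsT => ->.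
have -> : \big[Rplus/0]_(X : {set 'I_D}) (if X \in [set: {set 'I_D}] then 1 else 0)
   = \big[Rplus/0]_(X : {set 'I_D}) \big[Rmult/1]_(i : 'I_D) (fun _ (_ : bool) => 1) i (i \in X).
  apply: eq_bigr => X _; rewrite inE /= big_const_ord iter_mult pow1 //.
rewrite (@sum_set_prod _ (fun _ (_:bool) => 1)) prod_const_ord; f_equal; lra.
Qed.

Lemma INR_expn m n : INR (expn m n) = INR m ^ n.
Proof.
elim: n => [|n IH]; first by rewrite expn0.
by rewrite expnS mult_INR IH.
Qed.

Lemma card_Omega_R D k : INR #|[set: Omega D k]| = (2 ^ D) ^ k.
Proof.
by rewrite cardsT /Omega card_ffun card_ord INR_expn card_sets_R.
Qed.

Definition ind (b : bool) : R := if b then 1 else 0.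

Lemma sum_ind {T : finType} (b : T) (h : T -> R) :
  \big[Rplus/0]_(y : T) (ind (y == b) * h y) = h b.
Proof.
rewrite (bigD1 b) //= big1 /ind ?eqxx; first lra.
by move=> i /negbTE ->; lra.
Qed.

Lemma sum_ind' {T : finType} (b : T) (h : T -> R) :
  \big[Rplus/0]_(y : T) (ind (b == y) * h y) = h b.
Proof.
rewrite -[RHS](sum_ind b); apply: eq_bigr => y _; by rewrite eq_sym.
Qed.

Lemma sum_one (T : finType) : \big[Rplus/0]_(y : T) 1 = INR #|T|.
Proof.
rewrite -cardsT INR_card; apply: eq_bigr => y _; by rewrite inE.
Qed.

Lemma prod_two {k} {j1 j2 : 'I_k} (a : 'I_k -> R) : j1 != j2 ->
  \big[Rmult/1]_j a j = a j1 * (a j2 * \big[Rmult/1]_(j | (j != j1) && (j != j2)) a j).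
Proof.
move=> ne; rewrite (bigD1 j1) //= (bigD1 j2) /=; last by rewrite eq_sym.
do 2 f_equal; apply: eq_bigl => j; by rewrite andbC.
Qed.

Lemma sum_Omega_prod D k (F : 'I_k -> {set 'I_D} -> R) :
  \big[Rplus/0]_(S : Omega D k) \big[Rmult/1]_j F j (S j)
  = \big[Rmult/1]_j \big[Rplus/0]_z F j z.
Proof. by rewrite bigA_distr_bigA. Qed.

Lemma count_pair D k (j1 j2 : 'I_k) (x y : {set 'I_D}) : j1 != j2 ->
  \big[Rplus/0]_(S : Omega D k) (ind (x == S j1) * ind (y == S j2)) * (2 ^ D) ^ 2
  = (2 ^ D) ^ k.
Proof.
move=> ne.
have ne' : (j2 == j1) = false by rewrite eq_sym (negbTE ne).
pose F := fun (j : 'I_k) (z : {set 'I_D}) =>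
  if j == j1 then ind (x == z) else if j == j2 then ind (y == z) else 1.
have E : forall S : Omega D k,
    ind (x == S j1) * ind (y == S j2) = \big[Rmult/1]_j F j (S j).
  move=> S; rewrite (prod_two _ ne) /F eqxx ne' eqxx big1.
    lra.
  by move=> j /andP[/negbTE -> /negbTE ->].
rewrite (eq_bigr _ (fun S _ => E S)) sum_Omega_prod (prod_two _ ne).
rewrite -(prod_const_ord k) (prod_two _ ne).
rewrite /F eqxx ne' eqxx.
have h1 : forall (z0 : {set 'I_D}), \big[Rplus/0]_(z : {set 'I_D}) ind (z0 == z) = 1.
  move=> z0; rewrite -[RHS](sum_ind' z0 (fun _ => 1)).
  by apply: eq_bigr => z _ /=; rewrite Rmult_1_r.
rewrite !h1.
have -> : \big[Rmult/1]_(j | (j != j1) && (j != j2))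
     \big[Rplus/0]_z (if j == j1 then ind (x == z) else if j == j2 then ind (y == z) else 1)
   = \big[Rmult/1]_(j | (j != j1) && (j != j2)) 2 ^ D.
  apply: eq_bigr => j /andP[/negbTE -> /negbTE ->].
  by rewrite sum_one card_sets_R.
lra.
Qed.

Lemma count_one D k (j1 : 'I_k) (x : {set 'I_D}) :
  \big[Rplus/0]_(S : Omega D k) ind (x == S j1) * (2 ^ D)
  = (2 ^ D) ^ k.
Proof.
pose F := fun (j : 'I_k) (z : {set 'I_D}) =>
  if j == j1 then ind (x == z) else 1.
have E : forall S : Omega D k,
    ind (x == S j1) = \big[Rmult/1]_j F j (S j).
  move=> S; rewrite (bigD1 j1) //= /F eqxx big1; first lra.
  by move=> j /negbTE ->.
have h1 : \big[Rplus/0]_(z : {set 'I_D}) ind (x == z) = 1.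
  rewrite -[RHS](sum_ind' x (fun _ => 1)).
  by apply: eq_bigr => z _ /=; rewrite Rmult_1_r.
rewrite (eq_bigr _ (fun S _ => E S)) sum_Omega_prod.
rewrite -(prod_const_ord k) [RHS](bigD1 j1) //= [X in X * _](bigD1 j1) //=.
rewrite /F eqxx h1.
erewrite (@eq_bigr R 1 Rmult _ _ _ _ (fun _ => 2 ^ D)); first lra.
move=> j /= /negbTE ->.
by rewrite sum_one card_sets_R.
Qed.

Lemma sum_mull (I : Type) (r : seq I) (P : pred I) (F : I -> R) (c : R) :
  \big[Rplus/0]_(i <- r | P i) (F i * c) = (\big[Rplus/0]_(i <- r | P i) F i) * c.
Proof. by rewrite big_distrl. Qed.
Lemma sum_mulr (I : Type) (r : seq I) (P : pred I) (F : I -> R) (c : R) :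
  \big[Rplus/0]_(i <- r | P i) (c * F i) = c * (\big[Rplus/0]_(i <- r | P i) F i).
Proof. by rewrite big_distrr. Qed.

Lemma sum_Omega_one D k (j1 : 'I_k) (g : {set 'I_D} -> R) :
  (\big[Rplus/0]_(S : Omega D k) g (S j1)) * 2 ^ D
  = (2 ^ D) ^ k * \big[Rplus/0]_(x : {set 'I_D}) g x.
Proof.
rewrite (@eq_bigr _ _ _ _ _ _ _ (fun S : Omega D k => \big[Rplus/0]_x (ind (x == S j1) * g x))); last first.
  by move=> S _; rewrite sum_ind.
rewrite exchange_big /= big_distrl big_distrr /=.
apply: eq_bigr => x _.
rewrite sum_mull Rmult_assoc (Rmult_comm (g x)) -Rmult_assoc count_one; ring.
Qed.

Lemma sum_Omega_two D k (j1 j2 : 'I_k) (f : {set 'I_D} -> {set 'I_D} -> R) :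
  j1 != j2 ->
  (\big[Rplus/0]_(S : Omega D k) f (S j1) (S j2)) * (2 ^ D) ^ 2
  = (2 ^ D) ^ k * \big[Rplus/0]_(x : {set 'I_D}) \big[Rplus/0]_(y : {set 'I_D}) f x y.
Proof.
move=> ne.
rewrite (@eq_bigr _ _ _ _ _ _ _ (fun S : Omega D k => \big[Rplus/0]_x \big[Rplus/0]_y
            ((ind (x == S j1) * ind (y == S j2)) * f x y))); last first.
  move=> S _.
  rewrite -[LHS](sum_ind (S j1) (fun x => f x (S j2))).
  apply: eq_bigr => x _.
  rewrite -(sum_ind (S j2) (f x)) big_distrr /=.
  apply: eq_bigr => y _; ring.
rewrite exchange_big /= big_distrl big_distrr /=.
apply: eq_bigr => x _.
rewrite exchange_big /= big_distrl big_distrr /=.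
apply: eq_bigr => y _.
rewrite sum_mull Rmult_assoc (Rmult_comm (f x y)) -Rmult_assoc count_pair; [ring | exact ne].
Qed.

Lemma cosh_bound (th : R) : th ^ 2 <= 1/2 -> exp th + exp (- th) <= 2 * exp (2 * th ^ 2).
Proof.
move=> hth.
have ha := exp_ineq1_le th.
have hb := exp_ineq1_le (- th).
have hab : exp th * exp (- th) = 1 by rewrite -exp_plus Rplus_opp_r exp_0.
have hc := exp_ineq1_le (2 * th ^ 2).
have pa := exp_pos th. have pb := exp_pos (- th).
have t1 : th < 1 by nra.
have t2 : -1 < th by nra.
have e1 : exp th * (1 - th) <= 1 by nra.
have e2 : exp (- th) * (1 + th) <= 1 by nra.
have e3 : (exp th + exp (- th)) * (1 - th ^ 2) <= 2 by nra.
have e4 : 2 <= (2 + 4 * th ^ 2) * (1 - th ^ 2) by nra.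
have e5 : exp th + exp (- th) <= 2 + 4 * th ^ 2.
  have hp : 0 < 1 - th ^ 2 by nra.
  nra.
nra.
Qed.

Definition zv (a : bool) : R := if a then -1 else 1.
Definition Zf {D} (x : {set 'I_D}) : R := \big[Rplus/0]_(i : 'I_D) zv (i \in x).
Definition yv (a b : bool) : R := if b then (if a then 1 else -1) else 0.
Definition Yf {D} (x y : {set 'I_D}) : R :=
  \big[Rplus/0]_(i : 'I_D) yv (i \in x) (i \in y).

Lemma mgf_one D (th : R) : th ^ 2 <= 1/2 ->
  \big[Rplus/0]_(x : {set 'I_D}) exp (th * Zf x) <= 2 ^ D * exp (2 * INR D * th ^ 2).
Proof.
move=> hth.
rewrite (@eq_bigr _ _ _ _ _ _ _ (fun x : {set 'I_D} =>
    \big[Rmult/1]_(i : 'I_D) (fun (i : 'I_D) a => exp (th * zv a)) i (i \in x))); last first.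
  by move=> x _; rewrite /Zf -sum_mulr exp_sum.
rewrite (@sum_set_prod _ (fun (i : 'I_D) a => exp (th * zv a))) prod_const_ord /=.
have -> : 2 * INR D * th ^ 2 = INR D * (2 * th ^ 2) by ring.
rewrite -exp_mul_pow -Rpow_mult_distr.
apply: pow_incr; split.
  by have := exp_pos (th * -1); have := exp_pos (th * 1); lra.
have := cosh_bound th hth.
by rewrite Rmult_1_r (Rmult_comm th) -Ropp_mult_distr_l Rmult_1_l; lra.
Qed.

Lemma mgf_two D (th : R) : th ^ 2 <= 1/2 ->
  \big[Rplus/0]_(x : {set 'I_D}) \big[Rplus/0]_(y : {set 'I_D}) exp (th * Yf x y)
  <= (2 ^ D) ^ 2 * exp (2 * INR D * th ^ 2).
Proof.
move=> hth.
rewrite (@eq_bigr _ _ _ _ _ _ _ (fun x : {set 'I_D} =>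
    \big[Rmult/1]_(i : 'I_D) (fun (i : 'I_D) a => exp (th * yv a true) + exp (th * yv a false)) i (i \in x))); last first.
  move=> x _.
  rewrite (@eq_bigr _ _ _ _ _ _ _ (fun y : {set 'I_D} =>
    \big[Rmult/1]_(i : 'I_D) (fun (i : 'I_D) b => exp (th * yv (i \in x) b)) i (i \in y))); last first.
    by move=> y _; rewrite /Yf -sum_mulr exp_sum.
  by rewrite (@sum_set_prod _ (fun (i : 'I_D) b => exp (th * yv (i \in x) b))).
rewrite (@sum_set_prod _ (fun (i : 'I_D) a => exp (th * yv a true) + exp (th * yv a false))) prod_const_ord /=.
have -> : 2 * INR D * th ^ 2 = INR D * (2 * th ^ 2) by ring.
rewrite -exp_mul_pow /= (Rmult_1_r (2 ^ D)) -Rpow_mult_distr -Rpow_mult_distr.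
apply: pow_incr; split.
  by have := exp_pos (th * -1); have := exp_pos (th * 1); have := exp_pos (th * 0); lra.
have e1 : exp (th * 1) = exp th by rewrite Rmult_1_r.
have e2 : exp (th * -1) = exp (- th) by f_equal; ring.
have e0 : exp (th * 0) = 1 by rewrite Rmult_0_r exp_0.
rewrite e1 e2 e0.
have := cosh_bound th hth.
have := exp_pos (2 * th ^ 2).
have e3 : th * (th * 1) = th ^ 2 by ring.
rewrite e3.
have := exp_ineq1_le (2 * th ^ 2).
have : 0 <= th ^ 2 by nra.
lra.
Qed.

Lemma bigmax_ge (I : eqType) (r : seq I) (F : I -> R) x :
  x \in r -> F x <= \big[Rmax/0]_(i <- r) F i.
Proof.
elim: r => //= y r IH; rewrite inE big_cons => /orP [/eqP -> | h].
  exact: Rmax_l.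
apply: Rle_trans (IH h) _; exact: Rmax_r.
Qed.

Lemma bigmax_le (I : Type) (r : seq I) (P : pred I) (F : I -> R) b :
  0 <= b -> (forall i, F i <= b) -> \big[Rmax/0]_(i <- r | P i) F i <= b.
Proof.
move=> hb hF; apply: (big_ind (fun x => x <= b)) => //.
by move=> x y hx hy; apply: Rmax_lub.
Qed.

Lemma maxnorm_ge m n (M : 'I_m -> 'I_n -> R) i j : Rabs (M i j) <= maxnorm M.
Proof.
rewrite /maxnorm.
have h1 := @bigmax_ge _ (index_enum 'I_m) (fun i => \big[Rmax/0]_(j < n) Rabs (M i j)) i (mem_index_enum i).
have h2 := @bigmax_ge _ (index_enum 'I_n) (fun j => Rabs (M i j)) j (mem_index_enum j).
exact: Rle_trans h2 h1.
Qed.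

Lemma maxnorm_le m n (M : 'I_m -> 'I_n -> R) b :
  0 <= b -> (forall i j, Rabs (M i j) <= b) -> maxnorm M <= b.
Proof.
move=> hb h; rewrite /maxnorm; apply: bigmax_le => // i.
by apply: bigmax_le => // j.
Qed.

Definition B0 {D k} (S : Omega D k) (j : 'I_k) (i : 'I_D) : R :=
  if i \in S j then 1 else -1.

Lemma mulBA_B0 D k (S : Omega D k) j j' :
  mulBA (B0 S) (Amat S) j j' = Yf (S j) (S j') * / INR #|S j'|.
Proof.
rewrite /mulBA /Yf -sum_mull; apply: eq_bigr => i _.
rewrite /B0 /Amat /yv; case: (i \in S j'); case: (i \in S j); ring.
Qed.

Lemma Yf_diag D (x : {set 'I_D}) : Yf x x = INR #|x|.
Proof.
by rewrite /Yf INR_card; apply: eq_bigr => i _; rewrite /yv; case: (i \in x).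
Qed.

Lemma sum_Amat D k (S : Omega D k) j : (0 < #|S j|)%nat ->
  \big[Rplus/0]_(i < D) Amat S i j = 1.
Proof.
move=> hpos.
have hR : 0 < INR #|S j| by apply: lt_0_INR; apply/ltP.
rewrite (@eq_bigr _ _ _ _ _ _ _ (fun i => (if i \in S j then 1 else 0) * / INR #|S j|)).
  by rewrite sum_mull -INR_card Rinv_r //; lra.
by move=> i _; rewrite /Amat; case: (i \in S j); ring.
Qed.

Lemma lower_bound D k (S : Omega D k) (j0 : 'I_k) (delta : R) B :
  (0 < #|S j0|)%nat ->
  maxnorm (fun j j' => mulBA B (Amat S) j j' - idm j j') <= delta ->
  1 - delta <= maxnorm B.
Proof.
move=> hpos hB.
have h1 := @maxnorm_ge _ _ (fun j j' => mulBA B (Amat S) j j' - idm j j') j0 j0.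
rewrite /= /idm eqxx in h1.
have h2 : mulBA B (Amat S) j0 j0 <= maxnorm B.
  rewrite /mulBA -(Rmult_1_r (maxnorm B)) -(@sum_Amat _ _ S j0 hpos) -sum_mulr.
  apply: sum_le => i _.
  have hA : 0 <= Amat S i j0.
    rewrite /Amat; case: (i \in S j0); last lra.
    by apply: Rlt_le; apply: Rinv_0_lt_compat; apply: lt_0_INR; apply/ltP.
  have hb := @maxnorm_ge _ _ B j0 i.
  have hb' := Rle_abs (B j0 i).
  by apply: Rmult_le_compat_r => //; lra.
move: (Rle_trans _ _ _ h1 hB) => h3.
have := Rle_abs (- (mulBA B (Amat S) j0 j0 - 1)).
rewrite Rabs_Ropp => h4.
lra.
Qed.

Definition bw D k (lam t mu : R) (S : Omega D k) : R :=
  \big[Rplus/0]_(j : 'I_k) exp (mu * Zf (S j) - mu * INR D / 2)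
  + \big[Rplus/0]_(j1 : 'I_k) \big[Rplus/0]_(j2 : 'I_k)
      (if j1 == j2 then 0 else
         exp (lam * Yf (S j1) (S j2) - lam * t) + exp ((- lam) * Yf (S j1) (S j2) - lam * t)).

Lemma pow2_pos D : 0 < 2 ^ D.
Proof. apply: pow_lt; lra. Qed.

Lemma one_bound D k (j : 'I_k) mu : mu ^ 2 <= 1/2 ->
  \big[Rplus/0]_(S : Omega D k) exp (mu * Zf (S j) - mu * INR D / 2)
  <= (2 ^ D) ^ k * exp (2 * INR D * mu ^ 2 - mu * INR D / 2).
Proof.
move=> hmu.
have E := sum_Omega_one D k j (fun x => exp (mu * Zf x - mu * INR D / 2)).
have Q : \big[Rplus/0]_(x : {set 'I_D}) exp (mu * Zf x - mu * INR D / 2)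
   <= 2 ^ D * exp (2 * INR D * mu ^ 2 - mu * INR D / 2).
  rewrite (@eq_bigr _ _ _ _ _ _ _ (fun x : {set 'I_D} => exp (mu * Zf x) * exp (- (mu * INR D / 2)))); last first.
    by move=> x _; rewrite -exp_plus.
  rewrite sum_mull.
  have := mgf_one D mu hmu.
  have := exp_pos (- (mu * INR D / 2)).
  have -> : exp (2 * INR D * mu ^ 2 - mu * INR D / 2)
     = exp (2 * INR D * mu ^ 2) * exp (- (mu * INR D / 2)) by rewrite -exp_plus.
  move=> h1 h2.
  rewrite -Rmult_assoc; apply: Rmult_le_compat_r => //; lra.
have hN := pow2_pos D.
have hM : 0 < (2 ^ D) ^ k by apply: pow_lt.
apply: (Rmult_le_reg_r (2 ^ D)) => //.
rewrite E.
apply: Rle_trans (Rmult_le_compat_l _ _ _ (Rlt_le _ _ hM) Q) _; right; ring.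
Qed.

Lemma two_bound D k (j1 j2 : 'I_k) lam t : j1 != j2 -> lam ^ 2 <= 1/2 ->
  \big[Rplus/0]_(S : Omega D k)
     (exp (lam * Yf (S j1) (S j2) - lam * t) + exp ((- lam) * Yf (S j1) (S j2) - lam * t))
  <= (2 ^ D) ^ k * (2 * exp (2 * INR D * lam ^ 2 - lam * t)).
Proof.
move=> ne hlam.
have E := sum_Omega_two D k j1 j2
   (fun x y => exp (lam * Yf x y - lam * t) + exp ((- lam) * Yf x y - lam * t)) ne.
have hlam' : (- lam) ^ 2 <= 1/2 by have -> : (- lam) ^ 2 = lam ^ 2 by ring.
have Q : forall th, th ^ 2 = lam ^ 2 ->
   \big[Rplus/0]_(x : {set 'I_D}) \big[Rplus/0]_(y : {set 'I_D}) exp (th * Yf x y - lam * t)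
   <= (2 ^ D) ^ 2 * exp (2 * INR D * lam ^ 2 - lam * t).
  move=> th hth.
  rewrite (@eq_bigr _ _ _ _ _ _ _ (fun x : {set 'I_D} =>
      (\big[Rplus/0]_(y : {set 'I_D}) exp (th * Yf x y)) * exp (- (lam * t)))); last first.
    move=> x _; rewrite -sum_mull; apply: eq_bigr => y _; by rewrite -exp_plus.
  rewrite sum_mull.
  have := mgf_two D th (eq_ind_r (fun z => z <= 1/2) hlam hth).
  rewrite hth.
  have := exp_pos (- (lam * t)).
  have -> : exp (2 * INR D * lam ^ 2 - lam * t)
     = exp (2 * INR D * lam ^ 2) * exp (- (lam * t)) by rewrite -exp_plus.
  move=> h1 h2.
  rewrite -Rmult_assoc; apply: Rmult_le_compat_r => //; lra.
have Q1 := Q lam erefl.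
have Q2 := Q (- lam) ltac:(ring).
have hN := pow2_pos D.
have hN2 : 0 < (2 ^ D) ^ 2 by apply: pow_lt.
have hM : 0 < (2 ^ D) ^ k by apply: pow_lt.
apply: (Rmult_le_reg_r ((2 ^ D) ^ 2)) => //.
rewrite E.
have -> : \big[Rplus/0]_(x : {set 'I_D}) \big[Rplus/0]_(y : {set 'I_D})
     (exp (lam * Yf x y - lam * t) + exp ((- lam) * Yf x y - lam * t))
   = \big[Rplus/0]_(x : {set 'I_D}) \big[Rplus/0]_(y : {set 'I_D}) exp (lam * Yf x y - lam * t)
     + \big[Rplus/0]_(x : {set 'I_D}) \big[Rplus/0]_(y : {set 'I_D}) exp ((- lam) * Yf x y - lam * t).
  rewrite -big_split; apply: eq_bigr => x _; by rewrite -big_split.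
have := Rplus_le_compat _ _ _ _ Q1 Q2.
move=> h.
apply: Rle_trans (Rmult_le_compat_l _ _ _ (Rlt_le _ _ hM) h) _; right; ring.
Qed.

Lemma sum_bw D k lam t mu : mu ^ 2 <= 1/2 -> lam ^ 2 <= 1/2 ->
  \big[Rplus/0]_(S : Omega D k) bw D k lam t mu S
  <= (2 ^ D) ^ k * (INR k * exp (2 * INR D * mu ^ 2 - mu * INR D / 2)
                    + INR k * INR k * (2 * exp (2 * INR D * lam ^ 2 - lam * t))).
Proof.
move=> hmu hlam.
rewrite /bw big_split.
have h1 : \big[Rplus/0]_(S : Omega D k) \big[Rplus/0]_(j : 'I_k) exp (mu * Zf (S j) - mu * INR D / 2)
   <= INR k * ((2 ^ D) ^ k * exp (2 * INR D * mu ^ 2 - mu * INR D / 2)).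
  rewrite exchange_big /= -sum_const_ord; apply: sum_le => j _.
  exact: one_bound.
have h2 : \big[Rplus/0]_(S : Omega D k) \big[Rplus/0]_(j1 : 'I_k) \big[Rplus/0]_(j2 : 'I_k)
      (if j1 == j2 then 0 else
         exp (lam * Yf (S j1) (S j2) - lam * t) + exp ((- lam) * Yf (S j1) (S j2) - lam * t))
   <= INR k * (INR k * ((2 ^ D) ^ k * (2 * exp (2 * INR D * lam ^ 2 - lam * t)))).
  rewrite exchange_big /= -sum_const_ord; apply: sum_le => j1 _.
  rewrite exchange_big /= -sum_const_ord; apply: sum_le => j2 _.
  case: eqP => [_ | /eqP ne].
    rewrite big1 //.
    apply: Rmult_le_pos; first by apply: Rlt_le; apply: pow_lt; apply: pow2_pos.
    apply: Rmult_le_pos; first lra.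
    by apply: Rlt_le; apply: exp_pos.
  exact: two_bound.
apply: Rle_trans (Rplus_le_compat _ _ _ _ h1 h2) _; right; ring.
Qed.

Lemma Zf_card D (x : {set 'I_D}) : Zf x = INR D - 2 * INR #|x|.
Proof.
rewrite /Zf INR_card.
rewrite (@eq_bigr _ _ _ _ _ _ _ (fun i : 'I_D => 1 + (-2) * (if i \in x then 1 else 0))); last first.
  by move=> i _; rewrite /zv; case: (i \in x); ring.
rewrite big_split /= sum_mulr sum_const_ord.
have e : forall a b : R, a * 1 + -2 * b = a - 2 * b by move=> *; ring.
exact: e.
Qed.

Definition rltb (x y : R) : bool := if Rlt_dec x y then true else false.

Lemma rltbP x y : rltb x y = true <-> x < y.
Proof. rewrite /rltb; case: Rlt_dec => //. Qed.

Lemma bw_ge0 D k lam t mu S : 0 <= bw D k lam t mu S.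
Proof.
rewrite /bw.
have a : 0 <= \big[Rplus/0]_(j : 'I_k) exp (mu * Zf (S j) - mu * INR D / 2).
  by apply: sum_ge0 => j _; apply: Rlt_le; apply: exp_pos.
have b : 0 <= \big[Rplus/0]_(j1 : 'I_k) \big[Rplus/0]_(j2 : 'I_k)
      (if j1 == j2 then 0 else
         exp (lam * Yf (S j1) (S j2) - lam * t) + exp ((- lam) * Yf (S j1) (S j2) - lam * t)).
  apply: sum_ge0 => j1 _; apply: sum_ge0 => j2 _.
  case: (j1 == j2); first lra.
  have := exp_pos (lam * Yf (S j1) (S j2) - lam * t).
  have := exp_pos ((- lam) * Yf (S j1) (S j2) - lam * t).
  lra.
lra.
Qed.

Lemma good_props D k lam t mu (S : Omega D k) : 0 < lam -> 0 < mu ->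
  bw D k lam t mu S < 1 ->
  (forall j, INR D / 4 < INR #|S j|) /\
  (forall j1 j2, j1 != j2 -> Rabs (Yf (S j1) (S j2)) < t).
Proof.
move=> hlam hmu hbw.
have exp_lt1 : forall a, exp a < 1 -> a < 0.
  move=> a ha; case: (Rlt_le_dec a 0) => // h.
  have := exp_ineq1_le a; lra.
set A := \big[Rplus/0]_(j : 'I_k) exp (mu * Zf (S j) - mu * INR D / 2).
set F := fun j1 j2 : 'I_k => (if j1 == j2 then 0 else
         exp (lam * Yf (S j1) (S j2) - lam * t) + exp ((- lam) * Yf (S j1) (S j2) - lam * t)).
have Fge0 : forall j1 j2, 0 <= F j1 j2.
  move=> j1 j2; rewrite /F; case: (j1 == j2); first lra.
  have := exp_pos (lam * Yf (S j1) (S j2) - lam * t).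
  have := exp_pos ((- lam) * Yf (S j1) (S j2) - lam * t).
  lra.
have hA : 0 <= A by apply: sum_ge0 => j _; apply: Rlt_le; apply: exp_pos.
have hB : 0 <= \big[Rplus/0]_(j1 : 'I_k) \big[Rplus/0]_(j2 : 'I_k) F j1 j2.
  by apply: sum_ge0 => j1 _; apply: sum_ge0 => j2 _.
have hbw' : A + \big[Rplus/0]_(j1 : 'I_k) \big[Rplus/0]_(j2 : 'I_k) F j1 j2 < 1 by [].
split.
  move=> j.
  have h1 : exp (mu * Zf (S j) - mu * INR D / 2) <= A.
    rewrite /A; apply: (@term_le_sum _ (fun j => exp (mu * Zf (S j) - mu * INR D / 2))) => i.
    by apply: Rlt_le; apply: exp_pos.
  have h2 := exp_lt1 (mu * Zf (S j) - mu * INR D / 2) ltac:(lra).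
  rewrite Zf_card in h2.
  nra.
move=> j1 j2 ne.
have h1 : F j1 j2 <= \big[Rplus/0]_(j1 : 'I_k) \big[Rplus/0]_(j2 : 'I_k) F j1 j2.
  apply: Rle_trans (@term_le_sum _ (F j1) j2 (Fge0 j1)) _.
  apply: (@term_le_sum _ (fun j => \big[Rplus/0]_(j2 : 'I_k) F j j2)) => i.
  by apply: sum_ge0 => j _.
have h1' : F j1 j2 = exp (lam * Yf (S j1) (S j2) - lam * t) + exp ((- lam) * Yf (S j1) (S j2) - lam * t).
  by rewrite /F (negbTE ne).
have e1 := exp_pos (lam * Yf (S j1) (S j2) - lam * t).
have e2 := exp_pos ((- lam) * Yf (S j1) (S j2) - lam * t).
have h3 := exp_lt1 (lam * Yf (S j1) (S j2) - lam * t) ltac:(lra).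
have h4 := exp_lt1 ((- lam) * Yf (S j1) (S j2) - lam * t) ltac:(lra).
apply: Rabs_def1; nra.
Qed.

Lemma exp_le' x y : x <= y -> exp x <= exp y.
Proof.
case/Rle_lt_or_eq_dec => [h | ->]; last lra.
by apply: Rlt_le; apply: exp_increasing.
Qed.

Theorem lemma6p2 :
  exists c : R, 0 < c /\
  forall eps : R, 0 < eps ->
  exists K : nat,
  forall k D : nat, (K <= k)%nat -> c * ln (INR k) <= INR D ->
  exists G : {set Omega D k},
    (1 - eps) * INR #|[set: Omega D k]| <= INR #|G| /\
    forall S : Omega D k, S \in G ->
    forall delta : R, c * sqrt (ln (INR k) / INR D) <= delta ->
    exists l : R, is_lambda delta (Amat S) l /\ 1 - delta <= l <= 1.
Proof.
exists 64; split; first lra.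
move=> eps heps.
have [hz1 hz2] := archimed (3 / eps).
have h3e : 0 < 3 / eps by apply: Rdiv_lt_0_compat; lra.
have hu : (0 <= up (3 / eps))%Z by apply: Z.lt_le_incl; apply: lt_0_IZR; lra.
exists (Z.to_nat (up (3 / eps)) + 3)%nat => k D hk hD.
have hk3 : (3 <= k)%nat by apply: leq_trans hk; rewrite leq_addl.
have hkR : 3 / eps < INR k.
  have := le_INR _ _ (elimT leP hk).
  rewrite plus_INR INR_IZR_INZ Znat.Z2Nat.id //.
  have : 0 <= INR 3 by apply: pos_INR.
  lra.
have hk1 : 1 < INR k by apply: lt_1_INR; apply/ltP; apply: leq_trans hk3.
have hk0 : 0 < INR k by lra.
set L := ln (INR k).
have hL : 0 < L by rewrite /L -ln_1; apply: ln_increasing; lra.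
have hD' : 64 * L <= INR D := hD.
have hD0 : 0 < INR D by lra.
have hLD : 0 < L / INR D by apply: Rdiv_lt_0_compat.
set s := sqrt (L / INR D).
have hs2 : s * s = L / INR D by apply: sqrt_sqrt; lra.
have hs0 : 0 < s by apply: sqrt_lt_R0.
have hsD : s * s * INR D = L by rewrite hs2; field; lra.
set t := 16 * INR D * s.
set lam := 4 * s.
set mu := 1 / 8.
have hlam0 : 0 < lam by rewrite /lam; lra.
have hmu0 : 0 < mu by rewrite /mu; lra.
have hlam2 : lam ^ 2 <= 1 / 2.
  have : s * s * 64 <= 1 by nra.
  rewrite /lam; nra.
have hmu2 : mu ^ 2 <= 1 / 2 by rewrite /mu; lra.
exists [set S : Omega D k | rltb (bw D k lam t mu S) 1].
split.
  have hsum := sum_bw D k lam t mu hmu2 hlam2.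
  set M := (2 ^ D) ^ k in hsum *.
  have hM : 0 < M by apply: pow_lt; apply: pow2_pos.
  have eL : exp L = INR k by rewrite /L exp_ln.
  have f1 : exp (- (L + L)) * (INR k * INR k) = 1.
    by rewrite exp_Ropp exp_plus eL; field; lra.
  have f2 : exp (- (L + L + L)) * (INR k * INR k * INR k) = 1.
    by rewrite exp_Ropp !exp_plus eL; field; lra.
  have g1 : exp (2 * INR D * mu ^ 2 - mu * INR D / 2) <= exp (- (L + L)).
    by apply: exp_le'; rewrite /mu; nra.
  have g2 : exp (2 * INR D * lam ^ 2 - lam * t) <= exp (- (L + L + L)).
    apply: exp_le'; rewrite /lam /t.
    have -> : 2 * INR D * (4 * s) ^ 2 - 4 * s * (16 * INR D * s) = - 32 * (s * s * INR D) by ring.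
    rewrite hsD; lra.
  set X := INR k * exp (2 * INR D * mu ^ 2 - mu * INR D / 2)
         + INR k * INR k * (2 * exp (2 * INR D * lam ^ 2 - lam * t)).
  have hX : X * INR k <= 3.
    rewrite /X.
    set e1 := exp (2 * INR D * mu ^ 2 - mu * INR D / 2) in g1 *.
    set e2 := exp (2 * INR D * lam ^ 2 - lam * t) in g2 *.
    set a1 := exp (- (L + L)) in f1 g1.
    set a2 := exp (- (L + L + L)) in f2 g2.
    have hk2 : 0 < INR k * INR k by nra.
    have hk3' : 0 < INR k * INR k * INR k by nra.
    have := Rmult_le_compat_r _ _ _ (Rlt_le _ _ hk2) g1.
    have := Rmult_le_compat_r _ _ _ (Rlt_le _ _ hk3') g2.
    nra.
  have hXe : X <= eps.
    have : 3 < eps * INR k.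
      have := Rmult_lt_compat_l eps _ _ heps hkR.
      have -> : eps * (3 / eps) = 3 by field; lra.
      done.
    nra.
  set G := [set S : Omega D k | rltb (bw D k lam t mu S) 1].
  have hG : INR #|[set: Omega D k]| <= INR #|G| + \big[Rplus/0]_(S : Omega D k) bw D k lam t mu S.
    rewrite !INR_card -big_split; apply: sum_le => S _.
    rewrite /G !inE.
    case hS: (rltb (bw D k lam t mu S) 1) => /=.
      have := bw_ge0 D k lam t mu S; lra.
    have : ~ (bw D k lam t mu S < 1) by move/rltbP; rewrite hS.
    lra.
  rewrite card_Omega_R -/M.
  rewrite card_Omega_R -/M in hG.
  have : M * X <= M * eps by apply: Rmult_le_compat_l; lra.
  rewrite /X in hXe *.
  have : (1 - eps) * M = M - M * eps by ring.
  have h5 := Rle_trans _ _ _ hG (Rplus_le_compat_l (INR #|G|) _ _ hsum).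
  move=> e h6. rewrite e.
  have h7 := Rle_trans _ _ _ h5 (Rplus_le_compat_l (INR #|G|) _ _ h6).
  have h8 : M - M * eps <= INR #|G| by lra.
  exact: h8.
move=> S; rewrite inE => /rltbP hS delta hdelta.
have [hsz hY] := good_props D k lam t mu S hlam0 hmu0 hS.
have hkpos : (0 < k)%nat by apply: leq_trans hk3.
pose j0 : 'I_k := Ordinal hkpos.
have hpos : forall j, (0 < #|S j|)%nat.
  move=> j; apply/ltP; apply: INR_lt; have := hsz j; rewrite /=; lra.
have hdelta0 : 0 <= delta by have := sqrt_pos (L / INR D); rewrite -/s in hdelta *; lra.
have hfeas : maxnorm (fun j j' => mulBA (B0 S) (Amat S) j j' - idm j j') <= delta.
  apply: maxnorm_le => // j j'.
  rewrite mulBA_B0 /idm.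
  have hn := hsz j'.
  have hn0 : 0 < INR #|S j'| by lra.
  case: eqP => [e | /eqP ne].
    subst j'.
    rewrite Yf_diag Rinv_r; last lra.
    rewrite Rminus_diag Rabs_R0; lra.
  rewrite Rminus_0_r Rabs_mult (Rabs_pos_eq (/ _)); last first.
    by apply: Rlt_le; apply: Rinv_0_lt_compat.
  have hy := hY j j' ne.
  set u := / INR #|S j'|.
  have hu0 : 0 < u by apply: Rinv_0_lt_compat.
  have hun : INR #|S j'| * u = 1 by rewrite /u Rinv_r; lra.
  have hsu := Rmult_lt_0_compat _ _ hs0 hu0.
  have hya := Rabs_pos (Yf (S j) (S j')).
  rewrite /t in hy.
  nra.
have hB0 : maxnorm (B0 S) <= 1.
  apply: maxnorm_le => [|j i]; first lra.
  rewrite /B0; case: (i \in S j); rewrite ?Rabs_Ropp Rabs_R1; lra.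
have Ebound : forall v, feasible_values delta (Amat S) v -> 1 - delta <= v.
  by move=> v [B [hB ->]]; apply: (lower_bound D k S j0 delta B (hpos j0) hB).
pose E := fun x => feasible_values delta (Amat S) (- x).
have hEb : bound E.
  exists (- (1 - delta)) => x hx; have := Ebound _ hx; lra.
have hEn : exists x, E x.
  exists (- maxnorm (B0 S)); rewrite /E Ropp_involutive.
  by exists (B0 S); split.
have [m [hm1 hm2]] := completeness E hEb hEn.
have low : forall v, feasible_values delta (Amat S) v -> - m <= v.
  move=> v hv; have : E (- v) by rewrite /E Ropp_involutive.
  move/hm1; lra.
exists (- m); split; first split.
- exact: low.
- move=> m0 hm0.
  have : m <= - m0.
    apply: hm2 => x hx; have := hm0 _ hx; lra.
  lra.
- split.
    have : m <= - (1 - delta) by apply: hm2 => x hx; have := Ebound _ hx; lra.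
    lra.
  have : - m <= maxnorm (B0 S) by apply: low; exists (B0 S); split.
  lra.
Qed.
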